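(* Let $M$ be a strongly sofic monoid and let $A$ be a finite set. Then the monoid $\mathrm{CA}(M,A)$ is directly finite; in other words, $\mathrm{CA}(M,A)$ contains no submonoid isomorphic to the bicyclic monoid $\langle p,q : pq = 1\rangle$.
   Context: A monoid $M$ is strongly sofic if for every finite subset $K \subset M$ there exists an integer $\Delta_K \geq 1$ such that for every $\varepsilon > 0$ there exist a non-empty finite set $D$ and a map $\sigma \colon M \to \operatorname{Map}(D)$ (where $\operatorname{Map}(D)$ is the monoid of all maps $D \to D$ under composition) satisfying: (1) $\sigma(1_M) = \mathrm{Id}_D$; (2) $d_D^{\mathrm{Ham}}(\sigma(k_1k_2),\sigma(k_1)\sigma(k_2)) \leq \varepsilon$ for all $k_1,k_2 \in K$; (3) $d_D^{\mathrm{Ham}}(\sigma(k_1),\sigma(k_2)) \geq 1-\varepsilon$ for all distinct $k_1,k_2 \in K$; (4) $|\sigma(k)^{-1}(v)| \leq \Delta_K$ for all $k \in K$, $v \in D$. Here $d_D^{\mathrm{Ham}}(f,g) = \frac{1}{|D|}|\{v \in D : f(v) \neq g(v)\}|$. For a finite set $A$, $A^M$ is the set of maps $M \to A$ with the prodiscrete topology and shift action $(mx)(m') = x(m'm)$. $\mathrm{CA}(M,A)$ is the monoid (under composition) of all continuous $M$-equivariant maps $\tau \colon A^M \to A^M$ (cellular automata). A monoid is directly finite if $mm' = 1$ implies $m'm = 1$. *)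

(* Defs.v *)
From Stdlib Require Import Reals.
From mathcomp Require Import all_boot.

Set Implicit Arguments.
Unset Strict Implicit.
Unset Printing Implicit Defensive.

Definition is_monoid (M : Type) (mul : M -> M -> M) (one : M) : Prop :=
  (forall a b c, mul a (mul b c) = mul (mul a b) c) /\
  (forall a, mul one a = a) /\ (forall a, mul a one = a).

Definition ham (D : finType) (f g : D -> D) : R :=
  Rdiv (INR #|[set v : D | f v != g v]|) (INR #|D|).

(** Strongly sofic monoids. Finite subsets K of M are given by finite lists;
    the product in Map(D) is composition. *)
Definition strongly_sofic (M : Type) (mul : M -> M -> M) (one : M) : Prop :=
  forall K : seq M, exists Delta : nat, (1 <= Delta)%N /\
    forall eps : R, Rlt 0 eps ->
      exists (D : finType) (sigma : M -> D -> D),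
        (0 < #|D|)%N /\
        (forall v, sigma one v = v) /\
        (forall k1 k2, List.In k1 K -> List.In k2 K ->
           Rle (ham (sigma (mul k1 k2)) (fun v => sigma k1 (sigma k2 v))) eps) /\
        (forall k1 k2, List.In k1 K -> List.In k2 K -> k1 <> k2 ->
           Rle (Rminus 1 eps) (ham (sigma k1) (sigma k2))) /\
        (forall k, List.In k K -> forall v : D,
           (#|[set u : D | sigma k u == v]| <= Delta)%N).

Definition shift (M A : Type) (mul : M -> M -> M) (m : M) (x : M -> A) : M -> A :=
  fun m' => x (mul m' m).

(** Continuity for the prodiscrete topology on A^M (A discrete), unfolded:
    each coordinate of tau is locally constant, i.e. for every x and m there is
    a finite set F of M (a basic cylinder neighbourhood of x) such that every y
    agreeing with x on F satisfies (tau y) m = (tau x) m. *)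
Definition prodiscrete_continuous (M : Type) (A : finType)
    (tau : (M -> A) -> (M -> A)) : Prop :=
  forall (x : M -> A) (m : M), exists F : seq M,
    forall y : M -> A, (forall f, List.In f F -> y f = x f) -> tau y m = tau x m.

Definition equivariant (M : Type) (A : finType) (mul : M -> M -> M)
    (tau : (M -> A) -> (M -> A)) : Prop :=
  forall (m : M) (x : M -> A), tau (shift mul m x) = shift mul m (tau x).

Definition is_CA (M : Type) (A : finType) (mul : M -> M -> M)
    (tau : (M -> A) -> (M -> A)) : Prop :=
  prodiscrete_continuous tau /\ equivariant mul tau.

(* Main.v *)
Require Import Defs.
From Stdlib Require Import Reals Lra.
From Stdlib Require List.
From Stdlib Require Import FunctionalExtensionality Classical.
From mathcomp Require Import all_boot.
From mathcomp Require all_classical topology function_spaces.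
From mathcomp Require Import zify.
Module Topo.
Import all_classical topology function_spaces.
Import ArrowAsProduct.
Local Open Scope classical_set_scope.

Lemma uniform_memory (M : Type) (A : finType) (g : (M -> A) -> A) :
  (forall x, exists F : seq M, forall y, (forall f, List.In f F -> y f = x f) -> g y = g x) ->
  exists S : seq M, forall x y, (forall f, List.In f S -> y f = x f) -> g y = g x.
Proof.
move=> gc; apply: contrapT => nS.
pose I := {classic M}.
pose K : I -> topologicalType := fun _ : I => discrete_topology A.
pose X := forall i : I, K i.
pose B := fun S : seq M => [set x : X | exists y : M -> A,
   (forall f, List.In f S -> y f = x f) /\ g y <> g x].
have BS : forall S, B S !=set0.
  move=> S; apply: contrapT => hS; apply: nS; exists S => x y hxy.
  apply: contrapT => gne; apply: hS; exists x; exists y; split => //.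
have FF : Filter (filter_from [set: seq M] B).
  apply: filter_fromT_filter; first by exists [::].
  move=> S S'; exists (S ++ S') => x [y [hy gy]]; split; exists y; split => //.
  - by move=> f hf; apply: hy; apply: List.in_or_app; left.
  - by move=> f hf; apply: hy; apply: List.in_or_app; right.
have PF : ProperFilter (filter_from [set: seq M] B).
  by apply: filter_from_proper => S _; apply: BS.
have cT : compact [set f : X | forall i, [set: K i] (f i)].
  apply: (@tychonoff I K (fun i => [set: K i])) => i; apply: finite_compact.
  exact: (@finite_finset A setT).
have hT : filter_from [set: seq M] B [set f : X | forall i, [set: K i] (f i)].
  by apply: filterS filterT.
have [p [_ cp]] := cT _ PF hT.
have [Fp hFp] := gc p.
have nb : nbhs p [set x : X | forall f, List.In f Fp -> x f = p f].
  elim: Fp {hFp} => [|f Fp IH].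
    by apply: filterS (filterT) => x _ f [].
  have h1 : nbhs p (@proj I K f @^-1` [set p f]).
    have := @proj_continuous I K f p [set p f].
    apply; exact: (@discrete_set1 (discrete_topology A) (p f)).
  apply: filterS (filterI h1 IH) => x [h1x h2x] f' [<-|hf']; first exact: h1x.
  exact: h2x.
have [x [[y [hy gy]] hx]] := cp (B Fp) _ (ltac:(by exists Fp)) nb.
apply: gy; rewrite (hFp y) ?(hFp x) //.
by move=> f hf; rewrite hy // hx.
Qed.
Definition cE (M : Type) : eqType := {classic M}.
End Topo.

Lemma bern_aux c L : c ^ L * (c + L) <= (c.+1) ^ L * c.
Proof.
elim: L => [|L IH]; first by rewrite !expn0 addn0 !mul1n.
rewrite !expnS; move: IH; move: (c ^ L) (c.+1 ^ L) => X Y IH.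
have h : (c.+1) * (X * (c + L)) <= (c.+1) * (Y * c) by rewrite leq_mul2l IH orbT.
nia.
Qed.

Lemma bern c a : exists L, 0 < L /\ c ^ L * a <= (c.+1) ^ L.
Proof.
case: c => [|c].
  by exists 1; rewrite expn1 mul0n.
exists (c.+1 * a.+1); split; first by rewrite muln_gt0.
have := bern_aux c.+1 (c.+1 * a.+1).
move: (c.+1 ^ (c.+1 * a.+1)) (c.+2 ^ (c.+1 * a.+1)) => X Y h.
have h2 : c.+1 * (X * a.+2) <= c.+1 * Y by nia.
rewrite leq_mul2l /= in h2; nia.
Qed.

Lemma pow_mono x y k : x <= y -> x ^ k <= y ^ k.
Proof. by case: k => [|k] // h; rewrite leq_exp2r. Qed.

Lemma final_contra b a w j L : 0 < b -> (b.-1) ^ L * a <= b ^ L -> 0 < w ->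
  L.+1 * j <= w -> b ^ w <= (b.-1) ^ w * a ^ j -> False.
Proof.
move=> b0 hL w0 hw hb.
have [r hr] : exists r, w = L * j + r.+1.
  exists (w - L * j).-1; nia.
have h1 : (b.-1) ^ w * a ^ j = ((b.-1) ^ L * a) ^ j * (b.-1) ^ r.+1.
  rewrite hr expnD expnMn -expnM; nia.
have h2 : ((b.-1) ^ L * a) ^ j <= (b ^ L) ^ j by apply: pow_mono.
have h3 : (b.-1) ^ r.+1 < b ^ r.+1 by rewrite ltn_exp2r // prednK.
have h4 : 0 < (b ^ L) ^ j by rewrite !expn_gt0 b0.
have : (b.-1) ^ w * a ^ j < b ^ w.
  rewrite h1 hr expnD (mulnC L) expnM.
  apply: (@leq_ltn_trans ((b ^ L) ^ j * (b.-1) ^ r.+1)); first by rewrite leq_mul2r h2 orbT.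
  by rewrite -!expnM (mulnC j L) ltn_mul2l expn_gt0 b0 h3.
by rewrite ltnNge hb.
Qed.

Lemma cardU_le {T : finType} (A B : {set T}) : #|A :|: B| <= #|A| + #|B|.
Proof. by rewrite -cardsUI leq_addr. Qed.

Lemma card_has_bound (D : finType) n (Ls : seq {set D}) :
  (forall B, B \in Ls -> n * #|B| <= #|D|) ->
  n * #|[set v : D | has (fun B : {set D} => v \in B) Ls]| <= size Ls * #|D|.
Proof.
elim: Ls => [|B Ls IH] h.
  have -> : [set v : D | has (fun B : {set D} => v \in B) [::]] = set0.
    by apply/setP => v; rewrite !inE.
  by rewrite cards0 muln0.
set S := [set v : D | has (fun B : {set D} => v \in B) Ls].
have -> : [set v : D | has (fun B : {set D} => v \in B) (B :: Ls)] = B :|: S.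
  by apply/setP => v; rewrite !inE.
have h1 := h B (mem_head _ _).
have h2 : n * #|S| <= size Ls * #|D|.
  by apply: IH => B' hB'; apply: h; rewrite in_cons hB' orbT.
have h4 : n * #|B :|: S| <= n * #|B| + n * #|S|.
  by rewrite -mulnDr leq_mul2l cardU_le orbT.
move: h1 h2 h4; rewrite /= mulSn.
move: (n * #|B :|: S|) (n * #|B|) (n * #|S|) (size Ls * #|D|) #|D| => a b c d f; lia.
Qed.

Lemma card_preim_bound (D : finType) (X : eqType) (rho : X -> D -> D)
    (P : seq X) (U : seq D) Delta :
  (forall p, p \in P -> forall u, #|[set v : D | rho p v == u]| <= Delta) ->
  #|[set v : D | has (fun p => rho p v \in U) P]| <= size U * size P * Delta.
Proof.
elim: P => [|p P IH] h.
  have -> : [set v : D | has (fun p => rho p v \in U) [::]] = set0.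
    by apply/setP => v; rewrite !inE.
  by rewrite cards0.
set S := [set v : D | has (fun p => rho p v \in U) P].
set S1 := [set v : D | rho p v \in U].
have -> : [set v : D | has (fun p => rho p v \in U) (p :: P)] = S1 :|: S.
  by apply/setP => v; rewrite !inE.
have h2 : #|S| <= size U * size P * Delta.
  by apply: IH => p' hp'; apply: h; rewrite in_cons hp' orbT.
have h1 : #|S1| <= size U * Delta.
  have hp := h p (mem_head _ _).
  rewrite /S1; elim: (U) => [|u U' IH'].
    have -> : [set v : D | rho p v \in [::]] = set0.
      by apply/setP => v; rewrite !inE.
    by rewrite cards0.
  have -> : [set v : D | rho p v \in u :: U'] =
     [set v : D | rho p v == u] :|: [set v : D | rho p v \in U'].
    by apply/setP => v; rewrite !inE.
  have := cardU_le [set v : D | rho p v == u] [set v : D | rho p v \in U'].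
  have := hp u; rewrite /= mulSn.
  move: IH'. move: #|_ :|: _| #|[set v : D | rho p v == u]| #|[set v : D | rho p v \in U']| => a b c.
  lia.
have h3 := cardU_le S1 S.
move: h1 h2 h3; rewrite /= mulnS mulnDl.
move: #|S1 :|: S| #|S1| #|S| (size U * Delta) (size U * size P * Delta) => a b c d f; lia.
Qed.

Lemma greedy (D : finType) (good : pred D) (pos : D -> seq D) (Vs : seq D) :
  (forall v, good v -> uniq (pos v)) -> (forall v, 0 < size (pos v)) ->
  exists W : seq D, [/\ all good W, uniq (flatten (map pos W)) &
    forall v, v \in Vs -> good v -> has (fun u => u \in flatten (map pos W)) (pos v)].
Proof.
move=> hu hs; elim: Vs => [|v Vs [W [h1 h2 h3]]].
  by exists [::]; split.
case hv: (good v && ~~ has (fun u => u \in flatten (map pos W)) (pos v)).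
  move/andP: hv => [gv nh].
  exists (v :: W); split.
  - by rewrite /= gv h1.
  - rewrite /= cat_uniq hu // h2 andbT; move: nh; apply: contra => /hasP [u hu1 hu2]; by apply/hasP; exists u.
  - move=> v'; rewrite in_cons => /orP [/eqP -> _|hv' gv'].
      rewrite /=; case: (pos v) (hs v) => [|u s] //= _.
      by rewrite in_cons eqxx.
    apply: sub_has (h3 v' hv' gv') => u hu'.
    by rewrite /= mem_cat hu' orbT.
exists W; split => // v'; rewrite in_cons => /orP [/eqP -> gv|hv' gv'].
  by move: hv; rewrite gv /= => /negbFE.
exact: h3.
Qed.

Lemma lower_bound (D A : finType) (F G : {ffun D -> A} -> {ffun D -> A}) (D0 : {set D}) :
  (forall c v, v \in D0 -> G (F c) v = c v) ->
  #|A| ^ #|D| <= #|[set F c | c in [set: {ffun D -> A}]]| * #|A| ^ #|~: D0|.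
Proof.
move=> hG.
pose phi := fun c : {ffun D -> A} =>
  (F c, ([ffun s : {v : D | v \notin D0} => c (val s)] : {ffun {v : D | v \notin D0} -> A})).
have phi_inj : injective phi.
  move=> c c' [h1 h2]; apply/ffunP => v.
  case: (boolP (v \in D0)) => hv.
    by rewrite -(hG c v hv) -(hG c' v hv) h1.
  have := congr1 (fun f : {ffun {v : D | v \notin D0} -> A} => f (exist _ v hv)) h2.
  by rewrite !ffunE.
have := card_in_imset (f := phi) (D := [set: {ffun D -> A}]) (in2W phi_inj).
rewrite cardsT card_ffun => <-.
have -> : #|~: D0| = #|{: {v : D | v \notin D0}}|.
  by rewrite card_sig; apply: eq_card => v; rewrite !inE.
rewrite -card_ffun -cardsT -cardsX.
apply: subset_leq_card; apply/subsetP => y /imsetP [c _ ->].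
by rewrite !inE /= imset_f ?inE.
Qed.

Lemma size_flatten_const (D : finType) (pos : D -> seq D) N (W : seq D) :
  (forall w, size (pos w) = N) -> size (flatten (map pos W)) = N * size W.
Proof.
move=> h; elim: W => [|w W IH] /=; first by rewrite muln0.
by rewrite size_cat IH h mulnS.
Qed.

Lemma upper_bound (D A : finType) (a0 : A) (N : nat) (pos : D -> seq D)
    (pat : seq A) (W : seq D) :
  (forall w, size (pos w) = N) -> size pat = N -> uniq (flatten (map pos W)) ->
  #|[set d : {ffun D -> A} | all (fun w => map d (pos w) != pat) W]| * (#|A| ^ N) ^ size W
   <= ((#|A| ^ N).-1) ^ size W * #|A| ^ #|D|.
Proof.
move=> hsz hpat huniq.
set U := [set u : D | u \in flatten (map pos W)].
pose blk := fun (d : {ffun D -> A}) (w : D) =>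
  ([ffun k : 'I_N => d (nth w (pos w) k)] : {ffun 'I_N -> A}).
pose patf := ([ffun k : 'I_N => nth a0 pat k] : {ffun 'I_N -> A}).
pose psi := fun d : {ffun D -> A} =>
  (([ffun i : 'I_(size W) => blk d (tnth (in_tuple W) i)] : {ffun 'I_(size W) -> {ffun 'I_N -> A}}),
   ([ffun s : {v : D | v \notin U} => d (val s)] : {ffun {v : D | v \notin U} -> A})).
have psi_inj : injective psi.
  move=> d d' [h1 h2]; apply/ffunP => v.
  case: (boolP (v \in U)) => hv; last first.
    have := congr1 (fun f : {ffun {v : D | v \notin U} -> A} => f (exist _ v hv)) h2.
    by rewrite !ffunE.
  move: hv; rewrite inE => /flattenP [s /mapP [w hw ->] hvw].
  have hi : index w W < size W by rewrite index_mem.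
  have hk : index v (pos w) < N by rewrite -(hsz w) index_mem.
  have := congr1 (fun f : {ffun 'I_(size W) -> {ffun 'I_N -> A}} =>
     f (Ordinal hi) (Ordinal hk)) h1.
  rewrite /= !ffunE /=.
  by rewrite (tnth_nth w) /= nth_index // nth_index.
have hZ := card_in_imset (f := psi)
   (D := [set d : {ffun D -> A} | all (fun w => map d (pos w) != pat) W]) (in2W psi_inj).
have hsub : [set psi d | d in [set d : {ffun D -> A} | all (fun w => map d (pos w) != pat) W]]
   \subset setX [set f : {ffun 'I_(size W) -> {ffun 'I_N -> A}} | f \in ffun_on [set~ patf]] [set: {ffun {v : D | v \notin U} -> A}].
  apply/subsetP => y /imsetP [d hd ->].
  rewrite !inE /= andbT; apply/ffun_onP => i; rewrite ffunE !inE.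
  apply/negP => /eqP hb.
  move: hd; rewrite inE => /allP /(_ (tnth (in_tuple W) i) (mem_tnth _ _)) /negP; apply.
  apply/eqP; apply: (eq_from_nth (x0 := a0)); first by rewrite size_map hsz hpat.
  move=> k; rewrite size_map hsz => hk.
  have := congr1 (fun f : {ffun 'I_N -> A} => f (Ordinal hk)) hb.
  rewrite !ffunE /= => <-.
  by rewrite (nth_map (tnth (in_tuple W) i)) // hsz.
have hcard := subset_leq_card hsub.
rewrite cardsX hZ in hcard.
have hU : #|U| = N * size W.
  rewrite -(@size_flatten_const D pos N W hsz) -(card_uniqP huniq).
  by apply: eq_card => u; rewrite /U inE.
have h1 : #|[set f : {ffun 'I_(size W) -> {ffun 'I_N -> A}} | f \in ffun_on [set~ patf]]| = ((#|A| ^ N).-1) ^ size W.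
  rewrite (@eq_card _ _ (ffun_on [set~ patf])); last by move=> f; rewrite inE.
  by rewrite card_ffun_on cardsC1 card_ffun card_ord card_ord.
have h2 : #|[set: {ffun {v : D | v \notin U} -> A}]| = #|A| ^ (#|D| - N * size W).
  rewrite cardsT card_ffun card_sig -hU.
  have hc := cardsC U.
  have -> : #|[pred x | x \notin U]| = #|~: U| by apply: eq_card => v; rewrite !inE.
  congr (_ ^ _); lia.
rewrite h1 h2 in hcard.
have hle : N * size W <= #|D| by rewrite -hU max_card.
rewrite -expnM.
have -> : #|A| ^ #|D| = #|A| ^ (#|D| - N * size W) * #|A| ^ (N * size W).
  by rewrite -expnD subnK.
rewrite mulnA leq_mul2r hcard orbT //.
Qed.

Section RealLemmas.
Local Open Scope R_scope.

Lemma R1 (a d n : nat) : (0 < d)%N -> (0 < n)%N ->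
  (INR a / INR d <= / INR n) -> (n * a <= d)%N.
Proof.
move=> d0 n0 h.
have hd : (0 < INR d) by apply: lt_0_INR; apply/ltP.
have hn : (0 < INR n) by apply: lt_0_INR; apply/ltP.
have h2 : (INR a * INR n <= INR d).
  have e1 : (INR a * INR n = (INR a / INR d) * (INR d * INR n)) by field; lra.
  have e2 : (INR d = / INR n * (INR d * INR n)) by field; lra.
  rewrite e1 [X in (_ <= X)]e2.
  apply: Rmult_le_compat_r => //; nra.
rewrite -mult_INR in h2; apply/leP; apply: INR_le; by rewrite mulnC.
Qed.

Lemma R2 (a d n : nat) : (0 < d)%N -> (0 < n)%N -> (a <= d)%N ->
  (1 - / INR n <= INR a / INR d) -> (n * (d - a) <= d)%N.
Proof.
move=> d0 n0 ad h.
have hd : (0 < INR d) by apply: lt_0_INR; apply/ltP.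
have hn : (0 < INR n) by apply: lt_0_INR; apply/ltP.
have h2 : (INR n * (INR d - INR a) <= INR d).
  have e1 : (INR a = (INR a / INR d) * INR d) by field; lra.
  have h3 : ((1 - / INR n) * INR d <= INR a).
    rewrite e1; apply: Rmult_le_compat_r; lra.
  have e2 : ((1 - / INR n) * INR d = INR d - INR d / INR n) by field; lra.
  rewrite e2 in h3.
  have e3 : (INR d = INR n * (INR d / INR n)) by field; lra.
  rewrite [X in (_ <= X)]e3; apply: Rmult_le_compat_l; lra.
rewrite -minus_INR in h2; last by apply/leP.
rewrite -mult_INR in h2; apply/leP; apply: INR_le.
by rewrite -minusE -multE.
Qed.
End RealLemmas.

Lemma inP' (T : eqType) (x : T) (s : seq T) : List.In x s <-> x \in s.
Proof.
elim: s => [|y s IH] /=; first by split.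
rewrite in_cons; split.
  by move=> [->|/IH ->]; rewrite ?eqxx ?orbT.
by move=> /orP [/eqP ->|/IH]; [left|right].
Qed.

Lemma main_eq (M : eqType) (mul : M -> M -> M) (one : M)
    (hM : is_monoid mul one) (hsofic : strongly_sofic mul one) (A : finType)
    (tau sigma : (M -> A) -> (M -> A)) :
  is_CA mul tau -> is_CA mul sigma ->
  (forall x, tau (sigma x) = x) -> (forall x, sigma (tau x) = x).
Proof.
move=> [ctau etau] [csig esig] hts x0.
case: hM => [assoc [one_l one_r]].
have loc : forall g, equivariant mul g -> forall (x : M -> A) m, g x m = g (shift mul m x) one.
  by move=> g eg x m; rewrite eg /shift one_l.
have [Ss hSs] := @Topo.uniform_memory M A (fun x => sigma x one) (fun x => csig x one).
have [St hSt] := @Topo.uniform_memory M A (fun x => tau x one) (fun x => ctau x one).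
rewrite /= in hSs hSt.
apply: functional_extensionality => m0; apply: NNPP => hne.
pose x := shift mul m0 x0.
have hx : sigma (tau x) one <> x one.
  rewrite /x etau esig /shift one_l; exact: hne.
pose P := undup (one :: [seq mul t s | t <- St, s <- Ss]).
have oneP : one \in P by rewrite mem_undup mem_head.
have forb : forall y, ~ (forall p, p \in P -> sigma y p = x p).
  move=> y hy; apply: hx.
  rewrite -(hy one oneP); apply: hSs => s hs.
  rewrite -{1}(hts y) (loc _ etau x s) (loc _ etau (sigma y) s).
  apply: hSt => t ht; rewrite /shift; symmetry; apply: hy.
  rewrite mem_undup in_cons; apply/orP; right.
  by apply: allpairs_f; apply/inP'.
pose K := Ss ++ St ++ P.
have inK1 : forall s, s \in Ss -> List.In s K.
  by move=> s hs; apply: List.in_or_app; left; apply/inP'.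
have inK2 : forall s, s \in St -> List.In s K.
  by move=> s hs; apply: List.in_or_app; right; apply: List.in_or_app; left; apply/inP'.
have inK3 : forall s, s \in P -> List.In s K.
  by move=> s hs; apply: List.in_or_app; right; apply: List.in_or_app; right; apply/inP'.
have [Delta [hDelta hK]] := hsofic K.
have a0 : 0 < #|A| by apply/card_gt0P; exists (x one).
set a := #|A|.
set N := size P.
have N0 : 0 < N by rewrite /N; case: (P) oneP.
set b := a ^ N.
have b0 : 0 < b by rewrite expn_gt0 a0.
have [L [L0 hL]] := bern b.-1 a.
rewrite prednK // in hL.
set C0 := size Ss * size St.
set C1 := size Ss * N + N * N.
set n := (2 * C1 + 2 * L.+1 * C0 * (N * N * Delta)).+1.
have n0 : 0 < n by [].
have eps0 : Rlt 0 (Rinv (INR n)).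
  by apply: Rinv_0_lt_compat; apply: lt_0_INR; apply/ltP.
have [D [rho [hD0 [hone [hmul [hdist hpre]]]]]] := hK _ eps0.
have hmul' : forall k1 k2, List.In k1 K -> List.In k2 K ->
    n * #|[set v : D | rho (mul k1 k2) v != rho k1 (rho k2 v)]| <= #|D|.
  move=> k1 k2 h1 h2; apply: R1 => //; exact: hmul.
have hdist' : forall k1 k2, List.In k1 K -> List.In k2 K -> k1 <> k2 ->
    n * #|[set v : D | rho k1 v == rho k2 v]| <= #|D|.
  move=> k1 k2 h1 h2 h12.
  have e : ~: [set v : D | rho k1 v != rho k2 v] = [set v : D | rho k1 v == rho k2 v].
    by apply/setP => v; rewrite !inE negbK.
  have hc := cardsC [set v : D | rho k1 v != rho k2 v]; rewrite e in hc.
  have -> : #|[set v : D | rho k1 v == rho k2 v]| =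
     #|D| - #|[set v : D | rho k1 v != rho k2 v]| by lia.
  apply: R2 => //; first exact: max_card.
  exact: hdist.
pose Ls0 := [seq [set v : D | rho (mul s t) v != rho s (rho t v)] | s <- Ss, t <- St].
pose bad0 := [set v : D | has (fun B : {set D} => v \in B) Ls0].
have hbad0 : n * #|bad0| <= C0 * #|D|.
  have := @card_has_bound D n Ls0; rewrite size_allpairs; apply.
  move=> B /allpairsP [[s t] [/= hs ht ->]].
  by apply: hmul'; [apply: inK1|apply: inK2].
pose Ls1 := [seq [set v : D | rho (mul s p) v != rho s (rho p v)] | s <- Ss, p <- P] ++
            [seq (if p != q then [set v : D | rho p v == rho q v] else set0) | p <- P, q <- P].
pose bad1 := [set v : D | has (fun B : {set D} => v \in B) Ls1].
have hbad1 : n * #|bad1| <= C1 * #|D|.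
  have := @card_has_bound D n Ls1; rewrite size_cat !size_allpairs; apply.
  move=> B; rewrite mem_cat => /orP [] /allpairsP [[s t] [/= hs ht ->]].
    by apply: hmul'; [apply: inK1|apply: inK3].
  case: ifP => hst; last by rewrite cards0 muln0.
  apply: hdist'; [apply: inK3|apply: inK3|] => //.
  by move=> e; move: hst; rewrite e eqxx.
pose good := fun v : D => v \notin bad1.
pose pos := fun v : D => map (fun p => rho p v) P.
have hgood_uniq : forall v, good v -> uniq (pos v).
  move=> v gv; rewrite map_inj_in_uniq ?undup_uniq // => p q hp hq e.
  apply/eqP; apply: contraT => hpq; move: gv; rewrite /good inE.
  move=> /negP h; exfalso; apply: h; apply/hasP.
  exists (if p != q then [set v : D | rho p v == rho q v] else set0).
    by rewrite mem_cat; apply/orP; right; apply: allpairs_f.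
  by rewrite hpq inE e.
have hpos_size : forall v, size (pos v) = N by move=> v; rewrite size_map.
have [W [hWg hWu hWmax]] := @greedy D good pos (enum D) hgood_uniq
   (fun v => ltac:(by rewrite hpos_size)).
have hgoodcard : #|[set v : D | good v]| <= size (flatten (map pos W)) * N * Delta.
  have hpb := @card_preim_bound D M rho P (flatten (map pos W)) Delta
     (fun p hp u => hpre p (inK3 p hp) u).
  apply: leq_trans hpb.
  apply: subset_leq_card; apply/subsetP => v; rewrite !inE => gv.
  by have := hWmax v (mem_enum _ _) gv; rewrite /pos has_map.
rewrite (@size_flatten_const D pos N W hpos_size) in hgoodcard.
have hgb : #|[set v : D | good v]| + #|bad1| = #|D|.
  have e : [set v : D | good v] = ~: bad1 by apply/setP => v; rewrite !inE.
  by rewrite e addnC cardsC.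
have hD2 : #|D| <= 2 * (N * size W * N * Delta).
  move: hgb hbad1 hgoodcard; rewrite /n; clearbody n N C1 C0.
  move: #|[set v : D | good v]| #|bad1| #|D| (N * size W * N * Delta) C1 (L.+1 * C0 * (N * N * Delta)) => g b1 d X c1 Y.
  move=> e h1 h2.
  have h3 : (2 * c1 + 2 * Y).+1 * g <= (2 * c1 + 2 * Y).+1 * X by rewrite leq_mul2l h2 orbT.
  nia.
have hW0 : 0 < size W.
  move: hD2 hD0; clearbody N; case: (size W) => [|w] //.
  rewrite muln0 !mul0n muln0; case: #|D| => //.
have hj : L.+1 * #|bad0| <= size W.
  have h1 : n * #|bad0| <= C0 * (2 * (N * size W * N * Delta)).
    apply: leq_trans hbad0 _; by rewrite leq_mul2l hD2 orbT.
  have h2 : n * (L.+1 * #|bad0|) <= n * size W.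
    rewrite mulnCA.
    apply: (@leq_trans (L.+1 * (C0 * (2 * (N * size W * N * Delta))))).
      by rewrite leq_mul2l h1 orbT.
    rewrite /n; clearbody N C0 C1; nia.
  by rewrite leq_mul2l /= in h2.
pose pi := fun (c : {ffun D -> A}) (v : D) => (fun m => c (rho m v)) : M -> A.
pose sigD := fun c : {ffun D -> A} => ([ffun v => sigma (pi c v) one] : {ffun D -> A}).
pose tauD := fun c : {ffun D -> A} => ([ffun v => tau (pi c v) one] : {ffun D -> A}).
have hlow := @lower_bound D A sigD tauD (~: bad0).
have hlow' : #|A| ^ #|D| <= #|[set sigD c | c in [set: {ffun D -> A}]]| * #|A| ^ #|bad0|.
  rewrite -{1}(setCK bad0); apply: hlow => c v hv.
  rewrite /tauD ffunE.
  have e : c v = tau (sigma (pi c v)) one by rewrite hts /pi hone.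
  rewrite e; apply: hSt => t ht.
  rewrite /pi /sigD ffunE (loc _ esig (fun m => c (rho m v)) t); apply: hSs => s hs.
  rewrite /pi /shift; congr (c _); apply/eqP.
  move: hv; rewrite inE /bad0 inE => /hasP hv.
  apply: contraT => hne2; exfalso; apply: hv.
  exists [set v : D | rho (mul s t) v != rho s (rho t v)]; last by rewrite inE eq_sym.
  by apply: allpairs_f; apply/inP'.
have hsubZ : [set sigD c | c in [set: {ffun D -> A}]] \subset
    [set d : {ffun D -> A} | all (fun w => map d (pos w) != map x P) W].
  apply/subsetP => d /imsetP [c _ ->]; rewrite inE; apply/allP => w hw.
  apply/negP => /eqP e.
  apply: (forb (pi c w)) => p hp.
  rewrite /pos -map_comp in e.
  have e' := (proj2 (eq_in_map _ _ _) e) p hp.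
  rewrite /= in e'; rewrite -e' /sigD ffunE (loc _ esig (pi c w) p).
  apply: hSs => s hs.
  rewrite /pi /shift; congr (c _); apply/eqP.
  have gw := (allP hWg) w hw; move: gw; rewrite /good inE => /hasP hv.
  apply: contraT => hne2; exfalso; apply: hv.
  exists [set v : D | rho (mul s p) v != rho s (rho p v)]; last by rewrite inE.
  by rewrite mem_cat; apply/orP; left; apply: allpairs_f => //; apply/inP'.
have hup := @upper_bound D A (x one) N pos (map x P) W hpos_size (size_map _ _) hWu.
have hZ := subset_leq_card hsubZ.
move: hlow' hZ hup.
rewrite -/a.
move: #|[set sigD c | c in [set: {ffun D -> A}]]|
  #|[set d : {ffun D -> A} | all (fun w => map d (pos w) != map x P) W]| => I Z h1 h2 h3.
have h4 : a ^ #|D| * b ^ size W <= (b.-1) ^ size W * a ^ #|bad0| * a ^ #|D|.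
  apply: (@leq_trans (I * a ^ #|bad0| * b ^ size W)); first by rewrite leq_mul2r h1 orbT.
  apply: (@leq_trans (Z * b ^ size W * a ^ #|bad0|)).
    by rewrite mulnAC leq_mul2r leq_mul2r h2 !orbT.
  rewrite -/b in h3.
  by rewrite [X in _ <= X]mulnAC leq_mul2r h3 orbT.
have hpos : 0 < a ^ #|D| by rewrite expn_gt0 a0.
have h5 : b ^ size W <= b.-1 ^ size W * a ^ #|bad0|.
  by rewrite -(leq_pmul2r hpos) [X in X <= _]mulnC.
exact: (@final_contra b a (size W) #|bad0| L b0 hL hW0 hj h5).
Qed.

Theorem corollary1p2 (M : Type) (mul : M -> M -> M) (one : M)
    (hM : is_monoid mul one) (hsofic : strongly_sofic mul one) (A : finType)
    (tau sigma : (M -> A) -> (M -> A)) :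
  is_CA mul tau -> is_CA mul sigma ->
  (forall x, tau (sigma x) = x) -> (forall x, sigma (tau x) = x).
Proof.
move=> h1 h2 h3 x.
exact (@main_eq (Topo.cE M) mul one hM hsofic A tau sigma h1 h2 h3 x).
Qed.
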